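(* Consider the system $x[k+1]=Ax[k]+w[k]$, $y[k]=Cx[k]+v[k]$, where $A=\mathrm{diag}(\lambda_1,\dots,\lambda_n)$ with $0\le|\lambda_i|<1$ for all $i$, the process noise covariance $W$ is diagonal (and positive semidefinite), and the measurement noise covariance is $V=\mathbf{0}$. Then for every sensor selection $\mu$: (a) for all $i\in\{1,\dots,n\}$, $W_{ii}\le(\Sigma(\mu))_{ii}\le \frac{W_{ii}}{1-\lambda_i^2}$; (b) if $W_{ii}=0$ for some $i$, then $(\Sigma(\mu))_{ii}=0$; (c) if $\lambda_i=0$ for some $i$, then $(\Sigma(\mu))_{ii}=W_{ii}$; (d) if for some $i$, $W_{ii}\neq0$ and the $i$th column of $C(\mu)$ is zero, then $(\Sigma(\mu))_{ii}=\frac{W_{ii}}{1-\lambda_i^2}$; (e) if for some $i$, $\mathbf{e}_i\in\mathrm{rowspace}(C(\mu))$, then $(\Sigma(\mu))_{ii}=W_{ii}$.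
   Context: Here $w[k]$ and $v[k]$ are uncorrelated zero-mean white Gaussian noise processes with covariances $W$ and $V$. The rows of $C$ are grouped into candidate sensors $i=1,\dots,q$ (sensor $i$ contributes rows $C_i$); a sensor selection is $\mu\in\{0,1\}^q$, and $C(\mu)$ stacks the $C_i$ with $\mu_i=1$, $V(\mu)$ being the corresponding (here zero) noise covariance. $\Sigma(\mu)$ is the limit as $k\to\infty$ of the a priori error covariance $\Sigma_{k|k-1}(\mu)$ of the Kalman filter using the selected sensors; it satisfies $\Sigma(\mu)=A\Sigma(\mu)A^T+W-A\Sigma(\mu)C(\mu)^T(C(\mu)\Sigma(\mu)C(\mu)^T+V(\mu))^{-1}C(\mu)\Sigma(\mu)A^T$, with inverses interpreted as pseudo-inverses when singular. $\mathbf{e}_i$ denotes the row vector with $1$ in position $i$ and zeros elsewhere. *)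

(* Defs.v *)
From HB Require Import structures.
From mathcomp Require Import all_boot all_order all_algebra.
From mathcomp Require Import all_classical all_reals topology normedtype sequences.

Set Implicit Arguments.
Unset Strict Implicit.
Unset Printing Implicit Defensive.

Import Order.TTheory GRing.Theory Num.Theory numFieldNormedType.Exports.
Local Open Scope ring_scope.
Local Open Scope classical_set_scope.

Section Defs.
Variable R : realType.

Definition psd (n : nat) (M : 'M[R]_n) : Prop :=
  M^T = M /\ forall x : 'rV[R]_n, 0 <= (x *m M *m x^T) 0 0.

Definition is_pinv (p r : nat) (M : 'M[R]_(p, r)) (X : 'M[R]_(r, p)) : Prop :=
  [/\ M *m X *m M = M, X *m M *m X = X,
      (M *m X)^T = M *m X & (X *m M)^T = X *m M].

(* Moore--Penrose pseudo-inverse (it exists and is unique; xget picks it) *)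
Definition pinv (p r : nat) (M : 'M[R]_(p, r)) : 'M[R]_(r, p) :=
  xget 0 [set X | is_pinv M X].

Definition kalman_step (n p : nat) (A W : 'M[R]_n) (Cm : 'M[R]_(p, n))
    (V : 'M[R]_p) (P : 'M[R]_n) : 'M[R]_n :=
  A *m P *m A^T + W
  - A *m P *m Cm^T *m pinv (Cm *m P *m Cm^T + V) *m Cm *m P *m A^T.

(* Sigma_{k|k-1}, starting from Sigma_{0|-1} = Sig0 *)
Definition kalman_cov (n p : nat) (A W : 'M[R]_n) (Cm : 'M[R]_(p, n))
    (V : 'M[R]_p) (Sig0 : 'M[R]_n) (k : nat) : 'M[R]_n :=
  iter k (kalman_step A W Cm V) Sig0.

(* Sensors: the m rows of C are grouped into q sensors by s : 'I_m -> 'I_q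
   (row j belongs to sensor s j). A selection mu : 'I_q -> bool selects
   sensors; C(mu) stacks (in order) the rows of the selected sensors. *)
Definition selrows (m q : nat) (s : 'I_m -> 'I_q) (mu : {ffun 'I_q -> bool})
  : {set 'I_m} := [set j | mu (s j)].

Definition Csel (m n q : nat) (C : 'M[R]_(m, n)) (s : 'I_m -> 'I_q)
    (mu : {ffun 'I_q -> bool}) : 'M[R]_(#|selrows s mu|, n) :=
  \matrix_(k < #|selrows s mu|, j < n) C (enum_val k) j.

End Defs.

(* Main.v *)
Require Import Defs.
From HB Require Import structures.
From mathcomp Require Import all_boot all_order all_algebra.
From mathcomp Require Import all_classical all_reals topology normedtype sequences.
From mathcomp Require Import ring lra.
Import Order.TTheory GRing.Theory Num.Theory numFieldNormedType.Exports.
Local Open Scope ring_scope.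
Local Open Scope classical_set_scope.
Set Implicit Arguments.
Unset Strict Implicit.

Section PinvFacts.
Variable R : realType.

Lemma sq_rv_eq0 p (x : 'rV[R]_p) : (x *m x^T) 0 0 = 0 -> x = 0.
Proof.
rewrite mxE => /eqP; rewrite psumr_eq0 => [/allP H|j _]; last first.
  by rewrite mxE sqr_ge0.
apply/rowP => j; rewrite mxE.
have /H : j \in index_enum 'I_p by rewrite mem_index_enum.
by rewrite mxE -expr2 sqrf_eq0 => /implyP /(_ isT) /eqP.
Qed.

Lemma gram_unit r n (G : 'M[R]_(r, n)) : row_free G -> G *m G^T \in unitmx.
Proof.
move=> fG; rewrite -row_free_unit; apply: inj_row_free => v.
rewrite mulmxA => h.
have : ((v *m G) *m (v *m G)^T) 0 0 = 0.
  by rewrite trmx_mul mulmxA h mul0mx mxE.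
by move=> /sq_rv_eq0 /eqP; rewrite mulmx_free_eq0 // => /eqP.
Qed.

Lemma pinv_unique p r (M : 'M[R]_(p, r)) X Y : is_pinv M X -> is_pinv M Y -> X = Y.
Proof.
case=> [h1 h2 h3 h4] [k1 k2 k3 k4].
have eMt : M^T = M^T *m (M *m Y)^T by rewrite -trmx_mul k1.
have eX : X = X *m M *m Y.
  transitivity (X *m (X^T *m (M^T *m (M *m Y)^T))).
    by rewrite -eMt -trmx_mul h3 mulmxA h2.
  by rewrite (mulmxA X^T) -trmx_mul h3 k3 !mulmxA h2.
have eMt' : M^T = (X *m M)^T *m M^T by rewrite -trmx_mul mulmxA h1.
have eY : Y = X *m M *m Y.
  transitivity ((X *m M)^T *m M^T *m Y^T *m Y).
    by rewrite -eMt' -trmx_mul k4 k2.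
  rewrite -(mulmxA _ M^T) -(trmx_mul Y M) k4 h4.
  by rewrite -mulmxA k2.
by rewrite eX -eY.
Qed.

Lemma pinv_exists_fact p k r (F : 'M[R]_(p, k)) (G : 'M[R]_(k, r)) :
  row_free F^T -> row_free G -> exists X, is_pinv (F *m G) X.
Proof.
move=> fF fG.
have uG := gram_unit fG.
have uF := gram_unit fF. rewrite trmxK in uF.
exists (G^T *m invmx (G *m G^T) *m invmx (F^T *m F) *m F^T).
have eMX : F *m G *m (G^T *m invmx (G *m G^T) *m invmx (F^T *m F) *m F^T)
   = F *m invmx (F^T *m F) *m F^T.
  rewrite !mulmxA -(mulmxA F G) -(mulmxA F (G *m G^T)). by rewrite (mulmxV uG) mulmx1.
have eXM : (G^T *m invmx (G *m G^T) *m invmx (F^T *m F) *m F^T) *m (F *m G)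
   = G^T *m invmx (G *m G^T) *m G.
  by rewrite !mulmxA -(mulmxA _ F^T) -(mulmxA _ (invmx (F^T *m F))) mulVmx // mulmx1.
split.
- by rewrite eMX !mulmxA -(mulmxA _ F^T) -(mulmxA _ (invmx (F^T *m F))) mulVmx // mulmx1.
- by rewrite eXM !mulmxA -(mulmxA _ G) -(mulmxA G^T (invmx (G *m G^T)) (G *m G^T)) mulVmx // mulmx1.
- by rewrite eMX !trmx_mul trmxK trmx_inv trmx_mul trmxK !mulmxA.
- by rewrite eXM !trmx_mul trmxK trmx_inv trmx_mul trmxK !mulmxA.
Qed.

Lemma pinv_exists p r (M : 'M[R]_(p, r)) : exists X, is_pinv M X.
Proof.
have := @pinv_exists_fact _ _ _ (col_base M) (row_base M).
rewrite mulmx_base; apply; last exact: row_base_free.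
by rewrite /row_free mxrank_tr; exact: col_base_full.
Qed.

Lemma pinvP p r (M : 'M[R]_(p, r)) : is_pinv M (Defs.pinv M).
Proof.
rewrite /Defs.pinv; have [X hX] := pinv_exists M.
by have := @xgetPex _ 0 [set X | is_pinv M X] (ex_intro _ X hX).
Qed.

Lemma pinv_sym p (M : 'M[R]_p) : M^T = M -> (Defs.pinv M)^T = Defs.pinv M.
Proof.
move=> sM; have [h1 h2 h3 h4] := pinvP M.
apply: (@pinv_unique _ _ M); last exact: pinvP.
split.
- have e : M *m (Defs.pinv M)^T *m M = (M *m Defs.pinv M *m M)^T.
    by rewrite !trmx_mul sM mulmxA.
  by rewrite e h1 sM.
- by rewrite -[in RHS]h2 !trmx_mul sM mulmxA.
- by rewrite trmx_mul trmxK sM -h4 trmx_mul sM.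
- by rewrite trmx_mul trmxK sM -h3 trmx_mul sM.
Qed.

End PinvFacts.

Section QFacts.
Variable R : realType.
Variables (n p : nat) (C : 'M[R]_(p, n)) (P : 'M[R]_n).
Hypothesis PT : P^T = P.
Hypothesis Pge : forall x : 'rV[R]_n, 0 <= (x *m P *m x^T) 0 0.

Let M := C *m P *m C^T.
Let X := Defs.pinv M.
Let Q := P - P *m C^T *m X *m C *m P.

Lemma MT : M^T = M.
Proof. by rewrite /M !trmx_mul trmxK PT mulmxA. Qed.

Lemma XT : X^T = X.
Proof. exact: pinv_sym MT. Qed.

Lemma QT : Q^T = Q.
Proof.
rewrite /Q linearB /= PT !trmx_mul trmxK XT PT !mulmxA.
done.
Qed.

Lemma Qform (z : 'rV[R]_n) :
  z *m Q *m z^T = (z - z *m P *m C^T *m X *m C) *m P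
                   *m (z - z *m P *m C^T *m X *m C)^T.
Proof.
have [h1 h2 h3 h4] := pinvP M.
set v := z *m P *m C^T.
have vT : v^T = C *m P *m z^T by rewrite /v !trmx_mul trmxK PT mulmxA.
have yCT : (v *m X *m C)^T = C^T *m X *m v^T.
  by rewrite !trmx_mul XT mulmxA.
have e1 : z *m P *m (C^T *m X *m v^T) = v *m X *m v^T.
  by rewrite /v !mulmxA.
have e2 : v *m X *m C *m P *m z^T = v *m X *m v^T.
  by rewrite vT !mulmxA.
have e3 : v *m X *m C *m P *m (C^T *m X *m v^T) = v *m X *m v^T.
  rewrite !mulmxA -(mulmxA _ C P) -(mulmxA _ (C *m P) C^T).
  by rewrite -/M -(mulmxA v X M) -(mulmxA v) h2.
have e0 : z *m Q *m z^T = z *m P *m z^T - v *m X *m v^T.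
  by rewrite /Q mulmxBr mulmxBl vT !mulmxA.
rewrite e0 linearB /= yCT !mulmxBl !mulmxBr e1 e2 e3.
by rewrite opprB addrA subrK.
Qed.

Lemma Qge (z : 'rV[R]_n) : 0 <= (z *m Q *m z^T) 0 0.
Proof. by rewrite Qform Pge. Qed.

Lemma Qle (z : 'rV[R]_n) : (z *m Q *m z^T) 0 0 <= (z *m P *m z^T) 0 0.
Proof.
have [h1 h2 h3 h4] := pinvP M.
set v := z *m P *m C^T.
have vT : v^T = C *m P *m z^T by rewrite /v !trmx_mul trmxK PT mulmxA.
have e0 : z *m Q *m z^T = z *m P *m z^T - v *m X *m v^T.
  by rewrite /Q mulmxBr mulmxBl vT !mulmxA.
have e1 : v *m X *m v^T = (v *m X *m C) *m P *m (v *m X *m C)^T.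
  rewrite (trmx_mul (v *m X) C) (trmx_mul v X) XT !mulmxA -(mulmxA _ C P) -(mulmxA _ (C *m P) C^T).
  by rewrite -/M -(mulmxA v X M) -(mulmxA v (X *m M) X) h2.
have hB : 0 <= (v *m X *m v^T) 0 0 by rewrite e1 Pge.
rewrite e0; move: hB; set a := v *m X *m v^T; set b := z *m P *m z^T.
rewrite !mxE; move=> hB. by rewrite gerBl.
Qed.

Lemma Qrow (u : 'rV[R]_p) : ((u *m C) *m Q *m (u *m C)^T) = 0.
Proof.
have [h1 h2 h3 h4] := pinvP M.
have key : C *m Q *m C^T = 0.
  rewrite /Q mulmxBr mulmxBl.
  have -> : C *m (P *m C^T *m X *m C *m P) *m C^T = M *m X *m M.
    by rewrite /M !mulmxA.
  by rewrite h1 subrr.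
by rewrite trmx_mul !mulmxA -(mulmxA u C Q) -(mulmxA u (C *m Q) C^T) key mulmx0 mul0mx.
Qed.

End QFacts.

Section Lim.
Variable R : realType.

Lemma lim_le_seq (u v : nat -> R) a b : u @ \oo --> a -> v @ \oo --> b ->
  (forall k, u k <= v k) -> a <= b.
Proof. move=> ua vb h; apply: (ler_cvg_to ua vb); exact: nearW. Qed.

Lemma cvg_affine (u : nat -> R) a r w : u @ \oo --> a ->
  (fun k => r * u k + w) @ \oo --> r * a + w.
Proof. move=> h; apply: cvgD; [exact: cvgMl_tmp | exact: cvg_cst]. Qed.

Lemma cvg_geo_lim (r c : R) : `|r| < 1 ->
  (fun k => c * (1 - r ^+ k)) @ \oo --> c.
Proof.
move=> hr.
have h : (fun k => c * (1 - r ^+ k)) @ \oo --> c * (1 - 0).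
  apply: cvgMl_tmp; apply: cvgB; [exact: cvg_cst | exact: cvg_expr].
by rewrite subr0 mulr1 in h.
Qed.

Lemma cvg_shift1 (u : nat -> R) (a : R) : u @ \oo --> a -> (fun k => u k.+1) @ \oo --> a.
Proof. by rewrite -cvg_shiftS. Qed.

End Lim.

Section Kal.
Variables (R : realType) (n p : nat) (lam : 'rV[R]_n) (W : 'M[R]_n)
  (C : 'M[R]_(p, n)) (Sig0 : 'M[R]_n).
Hypotheses (Wd : is_diag_mx W) (Wpsd : psd W) (S0 : psd Sig0).

Definition Qof (P : 'M[R]_n) :=
  P - P *m C^T *m Defs.pinv (C *m P *m C^T) *m C *m P.

Lemma step_eq (P : 'M[R]_n) :
  kalman_step (diag_mx lam) W C 0 P = diag_mx lam *m Qof P *m (diag_mx lam)^T + W.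
Proof.
rewrite /kalman_step /Qof addr0 mulmxBr mulmxBl !mulmxA.
by rewrite addrAC.
Qed.

Lemma ent (Mx : 'M[R]_n) i : ((delta_mx 0 i : 'rV[R]_n) *m Mx *m (delta_mx 0 i : 'rV[R]_n)^T) 0 0 = Mx i i.
Proof. by rewrite -rowE trmx_delta -colE !mxE. Qed.

Lemma diag_ent (Mx : 'M[R]_n) i :
  (diag_mx lam *m Mx *m (diag_mx lam)^T) i i = lam 0 i ^+ 2 * Mx i i.
Proof. by rewrite tr_diag_mx mul_mx_diag mul_diag_mx !mxE mulrC mulrA -expr2. Qed.

Lemma addmxE' (S T : 'M[R]_n) i j : (S + T) i j = S i j + T i j.
Proof. by rewrite mxE. Qed.

Lemma addmxE1 (S T : 'M[R]_1) : (S + T) 0 0 = S 0 0 + T 0 0.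
Proof. by rewrite mxE. Qed.

Lemma psd_add (S T : 'M[R]_n) : psd S -> psd T -> psd (S + T).
Proof.
move=> [sS gS] [sT gT]; split; first by rewrite linearD /= sS sT.
by move=> x; rewrite mulmxDr mulmxDl addmxE1 addr_ge0.
Qed.

Lemma psd_congr (S B : 'M[R]_n) : psd S -> psd (B *m S *m B^T).
Proof.
move=> [sS gS]; split; first by rewrite !trmx_mul trmxK sS mulmxA.
move=> x; have := gS (x *m B).
by rewrite trmx_mul !mulmxA.
Qed.

Lemma Qof_psd (P : 'M[R]_n) : psd P -> psd (Qof P).
Proof.
move=> [sP gP]; split; first exact: QT.
by move=> x; apply: Qge.
Qed.

Lemma Qof_ii (P : 'M[R]_n) i : psd P -> 0 <= Qof P i i <= P i i.
Proof.
move=> [sP gP]; rewrite -!(ent _ i); apply/andP; split; first exact: Qge.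
exact: Qle.
Qed.

Let Pk k := kalman_cov (diag_mx lam) W C 0 Sig0 k.

Lemma PkS k : Pk k.+1 = diag_mx lam *m Qof (Pk k) *m (diag_mx lam)^T + W.
Proof. by rewrite -step_eq. Qed.

Lemma Pk_psd k : psd (Pk k).
Proof.
elim: k => [|k IH] //; rewrite PkS; apply: psd_add => //.
by apply: psd_congr; apply: Qof_psd.
Qed.

Lemma PkS_ii k i : Pk k.+1 i i = lam 0 i ^+ 2 * Qof (Pk k) i i + W i i.
Proof. by rewrite PkS addmxE' diag_ent. Qed.

Lemma L1 k i : W i i <= Pk k.+1 i i.
Proof.
rewrite PkS_ii lerDr; apply: mulr_ge0; first exact: sqr_ge0.
by have /andP[] := Qof_ii i (Pk_psd k).
Qed.

Lemma L2 k i : Pk k.+1 i i <= lam 0 i ^+ 2 * Pk k i i + W i i.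
Proof.
rewrite PkS_ii lerD2r; apply: ler_wpM2l; first exact: sqr_ge0.
by have /andP[] := Qof_ii i (Pk_psd k).
Qed.

Lemma L3 k i : ((delta_mx 0 i : 'rV[R]_n) <= C)%MS -> Pk k.+1 i i = W i i.
Proof.
move=> /submxP [D hD].
have [sP gP] := Pk_psd k.
rewrite PkS_ii -(ent (Qof (Pk k))) hD /Qof Qrow ?mxE ?mulr0 ?add0r //.
Qed.

Lemma zWz (z : 'rV[R]_n) i : W i i * z 0 i ^+ 2 <= (z *m W *m z^T) 0 0.
Proof.
have Wge j : 0 <= W j j by rewrite -(ent W j); case: Wpsd => _; apply.
have -> : (z *m W *m z^T) 0 0 = \sum_j W j j * z 0 j ^+ 2.
  rewrite mxE; apply: eq_bigr => j _.
  rewrite !mxE (bigD1 j) //= big1 ?addr0; last first.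
    move=> k kj; have /is_diag_mxP hW := Wd; rewrite hW ?mulr0 //.

  by rewrite mulrC mulrA -expr2 mulrC.
rewrite (bigD1 i) //= lerDl; apply: sumr_ge0 => j _.
by apply: mulr_ge0 => //; apply: sqr_ge0.
Qed.

Lemma subrvE (S T : 'rV[R]_n) j : (S - T) 0 j = S 0 j - T 0 j.
Proof. by rewrite !mxE. Qed.

Lemma L4 i : col i C = 0 -> lam 0 i ^+ 2 < 1 ->
  forall k (z : 'rV[R]_n),
  W i i / (1 - lam 0 i ^+ 2) * (1 - (lam 0 i ^+ 2) ^+ k) * z 0 i ^+ 2
    <= (z *m Pk k *m z^T) 0 0.
Proof.
move=> hc hr; elim=> [|k IH] z.
  by rewrite expr0 subrr mulr0 mul0r; case: (Pk_psd 0) => _; apply.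
have [sP gP] := Pk_psd k.
have e1 : (z *m Pk k.+1 *m z^T) 0 0 =
   ((z *m diag_mx lam) *m Qof (Pk k) *m (z *m diag_mx lam)^T) 0 0
   + (z *m W *m z^T) 0 0.
  by rewrite PkS mulmxDr mulmxDl addmxE1 trmx_mul !mulmxA.
rewrite e1 /Qof Qform //.
set w := (z *m diag_mx lam - _).
have hw : w 0 i = z 0 i * lam 0 i.
  rewrite /w subrvE mul_mx_diag mxE.
  rewrite [X in _ - X]mxE big1 ?subr0 // => j _.
  have := congr1 (fun M : 'cV[R]_p => M j 0) hc.
  by rewrite !mxE => ->; rewrite mulr0.
have hr1 : 1 - lam 0 i ^+ 2 != 0 by rewrite subr_eq0 eq_sym (lt_eqF hr).
have eid : W i i / (1 - lam 0 i ^+ 2) * (1 - (lam 0 i ^+ 2) ^+ k.+1) * z 0 i ^+ 2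
  = W i i / (1 - lam 0 i ^+ 2) * (1 - (lam 0 i ^+ 2) ^+ k) * (z 0 i * lam 0 i) ^+ 2
    + W i i * z 0 i ^+ 2.
  rewrite [(z 0 i * lam 0 i) ^+ 2]exprMn; move: (lam 0 i ^+ 2) hr1 => r h.
  rewrite [r ^+ k.+1]exprS; move: (r ^+ k) => t; by field.
by rewrite eid -hw; apply: lerD; [exact: IH | exact: zWz].
Qed.

End Kal.

Theorem lemma2 (R : realType) (n m q : nat) (lam : 'rV[R]_n) (W : 'M[R]_n)
    (C : 'M[R]_(m, n)) (s : 'I_m -> 'I_q) (Sig0 : 'M[R]_n) :
  (forall i : 'I_n, 0 <= `|lam 0 i| < 1) ->
  is_diag_mx W -> psd W ->
  psd Sig0 ->
  forall (mu : {ffun 'I_q -> bool}) (Sig : 'M[R]_n),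
  (forall i j : 'I_n,
     (fun k => kalman_cov (diag_mx lam) W (Csel C s mu) 0 Sig0 k i j)
       @ \oo --> (Sig i j : R)) ->
  [/\ (forall i : 'I_n, W i i <= Sig i i <= W i i / (1 - lam 0 i ^+ 2)),
      (forall i : 'I_n, W i i = 0 -> Sig i i = 0),
      (forall i : 'I_n, lam 0 i = 0 -> Sig i i = W i i),
      (forall i : 'I_n, W i i != 0 -> col i (Csel C s mu) = 0 ->
          Sig i i = W i i / (1 - lam 0 i ^+ 2))
    & (forall i : 'I_n, ((delta_mx 0 i : 'rV[R]_n) <= Csel C s mu)%MS -> Sig i i = W i i)].
Proof.
move=> hlam Wd Wpsd S0 mu Sig hcv.
set Cs := Csel C s mu.
have hr i : lam 0 i ^+ 2 < 1.
  have /andP[h0 h1] := hlam i.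
  rewrite -real_normK ?num_real //; move: (`|lam 0 i|) h0 h1 => a h0 h1; nra.
have hr0 i : 0 <= lam 0 i ^+ 2 by apply: sqr_ge0.
have hlo i : W i i <= Sig i i.
  apply: (@lim_le_seq _ (fun _ => W i i) _ _ _ (cvg_cst _) (cvg_shift1 (hcv i i))).
  by move=> k; apply: L1.
have hup i : Sig i i <= W i i / (1 - lam 0 i ^+ 2).
  have h : Sig i i <= lam 0 i ^+ 2 * Sig i i + W i i.
    apply: (lim_le_seq (cvg_shift1 (hcv i i)) (cvg_affine (hcv i i))).
    by move=> k; apply: L2.
  have := hr i; have := hr0 i; move: (lam 0 i ^+ 2) h => r h h0 h1.
  rewrite ler_pdivlMr; last by rewrite subr_gt0.
  lra.
have ha i : W i i <= Sig i i <= W i i / (1 - lam 0 i ^+ 2).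
  by rewrite hlo hup.
split => //.
- move=> i hW; apply/eqP; rewrite eq_le.
  by have := ha i; rewrite hW mul0r => /andP[-> ->].
- move=> i hl; apply/eqP; rewrite eq_le hlo andbT.
  by have := hup i; rewrite hl expr0n /= subr0 divr1.
- move=> i _ hc; apply/eqP; rewrite eq_le hup /=.
  have hn : `|lam 0 i ^+ 2| < 1 by rewrite ger0_norm ?hr.
  have hgeo := @cvg_geo_lim _ (lam 0 i ^+ 2) (W i i / (1 - lam 0 i ^+ 2)) hn.
  apply: (lim_le_seq hgeo (hcv i i)) => k.
  have := L4 Wd Wpsd S0 hc (hr i) k (delta_mx 0 i).
  by rewrite ent mxE !eqxx expr1n mulr1.
- move=> i hsub; apply/eqP; rewrite eq_le hlo andbT.
  apply: (@lim_le_seq _ _ (fun _ => W i i) _ _ (cvg_shift1 (hcv i i)) (cvg_cst _)).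
  by move=> k; rewrite (L3 lam Wpsd S0 k hsub).
Qed.
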